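(* Let $g(x)=1-(1-x^2)^4$ for $|x|\le1$ and $g(x)=1$ otherwise, and let $D=([0,+\infty[\times\{2\})\cup(\{0\}\times]0,2])$. Then there exists a unique map $\Delta:]0,+\infty[\times]0,+\infty[\to D$ such that for every $(t,x)$, writing $\Delta(t,x)=(q_o,p_o)$, one has $\mathcal{F}_q(t,q_o,p_o)=x$ and $\mathcal{F}_q(s,q_o,p_o)>0$ for all $s\in]0,t[$. Moreover: (1) $\Delta$ is continuous; (2) if $\Delta(t_o,x_o)=(0,p_o)$, $\Delta(t_o,x_o')=(0,p_o')$ and $0<x_o<x_o'<q^\sharp(t_o)$, then $p_o<p_o'$; (3) for all $x\in]0,+\infty[$, $\lim_{t\to0+}\Delta(t,x)=(x,2)$.
   Context: $\mathcal{F}(t,q_o,p_o)=(\mathcal{F}_q,\mathcal{F}_p)(t,q_o,p_o)=(q(t),p(t))$, where $(q,p)$ is the global solution of $\dot q=p$, $\dot p=-g'(q)$ with $(q(0),p(0))=(q_o,p_o)$. $q^\sharp(t)=\mathcal{F}_q(t,0,2)$. *)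

(* Defs.v *)
From Stdlib Require Import Reals.
From Coquelicot Require Import Coquelicot.
Open Scope R_scope.

Definition g (x : R) : R :=
  if Rle_dec (Rabs x) 1 then 1 - (1 - x ^ 2) ^ 4 else 1.

Definition is_flow (Fq Fp : R -> R -> R -> R) : Prop :=
  forall q0 p0 : R,
    Fq 0 q0 p0 = q0 /\ Fp 0 q0 p0 = p0 /\
    forall t : R,
      is_derive (fun s => Fq s q0 p0) t (Fp t q0 p0) /\
      is_derive (fun s => Fp s q0 p0) t (- Derive g (Fq t q0 p0)).

Definition inD (z : R * R) : Prop :=
  (0 <= fst z /\ snd z = 2) \/ (fst z = 0 /\ 0 < snd z <= 2).

Definition Delta_prop (Fq : R -> R -> R -> R) (Delta : R -> R -> R * R)
  (t x : R) : Prop :=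
  inD (Delta t x) /\
  Fq t (fst (Delta t x)) (snd (Delta t x)) = x /\
  (forall s, 0 < s < t -> Fq s (fst (Delta t x)) (snd (Delta t x)) > 0).

Definition qsharp (Fq : R -> R -> R -> R) (t : R) : R := Fq t 0 2.

(* Main.v *)
Require Import Defs.
From Stdlib Require Import Reals Lra Psatz Classical ClassicalEpsilon.
From Coquelicot Require Import Coquelicot.
Open Scope R_scope.

Lemma D_plus (f g : R -> R) (x a b : R) : is_derive f x a -> is_derive g x b ->
  is_derive (fun y => f y + g y) x (a + b).
Proof. intros Hf Hg. exact (is_derive_plus f g x a b Hf Hg). Qed.
Lemma D_minus (f g : R -> R) (x a b : R) : is_derive f x a -> is_derive g x b ->
  is_derive (fun y => f y - g y) x (a - b).
Proof. intros Hf Hg. exact (is_derive_minus f g x a b Hf Hg). Qed.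
Lemma D_mult (f g : R -> R) (x a b : R) : is_derive f x a -> is_derive g x b ->
  is_derive (fun y => f y * g y) x (a * g x + f x * b).
Proof. intros Hf Hg. exact (is_derive_mult f g x a b Hf Hg Rmult_comm). Qed.
Lemma D_opp (f : R -> R) (x a : R) : is_derive f x a -> is_derive (fun y => - f y) x (- a).
Proof. intros Hf. exact (is_derive_opp f x a Hf). Qed.
Lemma D_comp (f g : R -> R) (x a b : R) : is_derive f (g x) a -> is_derive g x b ->
  is_derive (fun y => f (g y)) x (b * a).
Proof. intros Hf Hg. exact (is_derive_comp f g x a b Hf Hg). Qed.
Lemma D_const (c x : R) : is_derive (fun _ : R => c) x 0.
Proof. exact (is_derive_const c x). Qed.
Lemma D_id (x : R) : is_derive (fun y : R => y) x 1.
Proof. exact (is_derive_id x). Qed.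
Lemma D_ext (f g : R -> R) (x a : R) : (forall y, f y = g y) -> is_derive f x a -> is_derive g x a.
Proof. intros H Hf. apply is_derive_ext with f; auto. Qed.
Lemma D_eq (f : R -> R) (x a b : R) : a = b -> is_derive f x a -> is_derive f x b.
Proof. intros ->; auto. Qed.

Lemma deriv_cont (f : R -> R) (x l : R) : is_derive f x l -> continuity_pt f x.
Proof.
  intros H. apply continuity_pt_filterlim.
  apply (ex_derive_continuous f x). exists l; exact H.
Qed.

Lemma mvt (f df : R -> R) (a b : R) : a <= b -> (forall x, is_derive f x (df x)) ->
  exists c, a <= c <= b /\ f b - f a = df c * (b - a).
Proof.
  intros Hab Hd.
  destruct (MVT_gen f a b df) as [c [Hc E]].
  - intros; apply Hd.
  - intros; apply (deriv_cont f x (df x)); apply Hd.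
  - exists c; split; auto.
    rewrite Rmin_left in Hc by lra; rewrite Rmax_right in Hc by lra; auto.
Qed.

Lemma loc_R (P : R -> Prop) x d : 0 < d -> (forall y, Rabs (y - x) < d -> P y) ->
  locally x P.
Proof. intros Hd H. exists (mkposreal d Hd). intros y Hy. apply H. exact Hy. Qed.

Lemma deriv_quad (f : R -> R) (x K d : R) : 0 < d -> 0 <= K ->
  (forall y, Rabs (y - x) < d -> Rabs (f y - f x) <= K * (y - x)^2) ->
  is_derive f x 0.
Proof.
  intros Hd HK H. apply is_derive_Reals. intros eps Heps.
  assert (Hm : 0 < Rmin d (eps / (K + 1))).
  { apply Rmin_pos; auto. apply Rdiv_lt_0_compat; lra. }
  exists (mkposreal _ Hm). intros h Hh0 Hh. simpl in Hh.
  assert (H1 : Rabs h < d) by (eapply Rlt_le_trans; [exact Hh| apply Rmin_l]).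
  assert (H2 : Rabs h < eps / (K+1)) by (eapply Rlt_le_trans; [exact Hh| apply Rmin_r]).
  specialize (H (x + h)). replace (x + h - x) with h in H by ring.
  specialize (H H1).
  rewrite Rminus_0_r. unfold Rdiv. rewrite Rabs_mult, Rabs_inv.
  assert (Hp : 0 < Rabs h) by (apply Rabs_pos_lt; auto).
  apply Rmult_lt_reg_r with (Rabs h); auto.
  rewrite Rmult_assoc, Rinv_l by lra. rewrite Rmult_1_r.
  eapply Rle_lt_trans; [exact H|].
  replace (h ^ 2) with (Rabs h * Rabs h).
  2:{ rewrite <- Rabs_mult. rewrite Rabs_right; [ring| ]. nra. }
  assert (Rabs h * (K + 1) < eps).
  { apply Rmult_lt_reg_r with (/ (K+1)). apply Rinv_0_lt_compat; lra.
    rewrite Rmult_assoc, Rinv_r by lra. lra. }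
  nra.
Qed.

Definition gp (x : R) : R := if Rle_dec (Rabs x) 1 then 8 * x * (1 - x^2)^3 else 0.
Definition kk (x : R) : R := if Rle_dec (Rabs x) 1 then 8 * (1 - x^2)^3 else 0.

Lemma abs_le1 x : Rabs x <= 1 -> 0 <= 1 - x^2 <= 1.
Proof. intros H. apply Rabs_le_between in H. nra. Qed.

Lemma gp_kk x : gp x = x * kk x.
Proof. unfold gp, kk. destruct Rle_dec; ring. Qed.

Lemma gp0 : gp 0 = 0.
Proof. unfold gp. destruct Rle_dec; ring. Qed.

Lemma g_range x : 0 <= g x <= 1.
Proof.
  unfold g. destruct Rle_dec as [H|H]; [|lra].
  apply abs_le1 in H. assert (0 <= (1 - x^2)^4 <= 1).
  { split. apply pow_le; lra. replace 1 with (1^4) at 2 by ring. apply pow_incr; lra. }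
  lra.
Qed.

Lemma g0 : g 0 = 0.
Proof. unfold g. destruct Rle_dec as [H|H]. ring. rewrite Rabs_R0 in H; lra. Qed.

Lemma g_mono a b : 0 <= a <= b -> g a <= g b.
Proof.
  intros Hab. unfold g.
  destruct (Rle_dec (Rabs b) 1) as [Hb|Hb]; destruct (Rle_dec (Rabs a) 1) as [Ha|Ha].
  - rewrite Rabs_right in Ha, Hb by lra.
    assert ((1 - b^2)^4 <= (1 - a^2)^4) by (apply pow_incr; nra). lra.
  - rewrite Rabs_right in Ha, Hb by lra. lra.
  - assert (0 <= (1 - a^2)^4) by (apply pow_le; apply abs_le1 in Ha; lra). lra.
  - lra.
Qed.

Lemma kk_nonneg x : 0 <= kk x.
Proof. unfold kk. destruct Rle_dec as [H|H]; [|lra]. apply abs_le1 in H.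
  assert (0 <= (1-x^2)^3) by (apply pow_le; lra). lra. Qed.

Lemma kk_anti a b : 0 <= a <= b -> kk b <= kk a.
Proof.
  intros Hab. unfold kk.
  destruct (Rle_dec (Rabs b) 1) as [Hb|Hb]; destruct (Rle_dec (Rabs a) 1) as [Ha|Ha].
  - rewrite Rabs_right in Ha, Hb by lra.
    assert ((1 - b^2)^3 <= (1 - a^2)^3) by (apply pow_incr; nra). lra.
  - rewrite Rabs_right in Ha, Hb by lra. lra.
  - assert (0 <= (1 - a^2)^3) by (apply pow_le; apply abs_le1 in Ha; lra). lra.
  - lra.
Qed.

Lemma gp_bound x : Rabs (gp x) <= 8.
Proof.
  unfold gp. destruct Rle_dec as [H|H].
  - pose proof (abs_le1 x H). rewrite !Rabs_mult. rewrite (Rabs_right 8) by lra.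
    rewrite (Rabs_right ((1-x^2)^3)) by (apply Rle_ge, pow_le; lra).
    assert ((1-x^2)^3 <= 1) by (replace 1 with (1^3) at 2 by ring; apply pow_incr; lra).
    assert (0 <= (1-x^2)^3) by (apply pow_le; lra).
    pose proof (Rabs_pos x). nra.
  - rewrite Rabs_R0; lra.
Qed.

Definition Pg (x : R) := 8 * x * (1 - x^2)^3.
Lemma Pg_deriv x : is_derive Pg x (8 * (1 - x^2)^2 * (1 - 7 * x^2)).
Proof. unfold Pg. auto_derive; auto. ring. Qed.

Lemma Pg_lip a b : Rabs a <= 1 -> Rabs b <= 1 -> Rabs (Pg a - Pg b) <= 48 * Rabs (a - b).
Proof.
  intros Ha Hb. apply Rabs_le_between in Ha. apply Rabs_le_between in Hb.
  assert (Hm : forall u v, -1 <= u <= 1 -> -1 <= v <= 1 -> u <= v ->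
            Rabs (Pg v - Pg u) <= 48 * Rabs (v - u)).
  { intros u v Hu Hv Huv.
    destruct (mvt Pg (fun x => 8 * (1 - x^2)^2 * (1 - 7 * x^2)) u v Huv Pg_deriv) as [c [Hc E]].
    rewrite E, Rabs_mult. apply Rmult_le_compat_r. apply Rabs_pos.
    assert (0 <= 1 - c^2 <= 1) by nra.
    assert (0 <= (1-c^2)^2 <= 1) by (split; [apply pow_le; lra| nra]).
    apply Rabs_le_between. nra. }
  destruct (Rle_dec b a).
  - apply Hm; lra.
  - rewrite Rabs_minus_sym, (Rabs_minus_sym a b). apply Hm; lra.
Qed.

Lemma gp_Pg x : Rabs x <= 1 -> gp x = Pg x.
Proof. intros H. unfold gp, Pg. destruct Rle_dec; tauto. Qed.
Lemma gp_out x : ~ Rabs x <= 1 -> gp x = 0.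
Proof. intros H. unfold gp. destruct Rle_dec; tauto. Qed.
Lemma Pg1 : Pg 1 = 0. Proof. unfold Pg; ring. Qed.
Lemma Pgm1 : Pg (-1) = 0. Proof. unfold Pg; ring. Qed.

Lemma gp_lip a b : Rabs (gp a - gp b) <= 48 * Rabs (a - b).
Proof.
  assert (Hhalf : forall a b, Rabs a <= 1 -> ~ Rabs b <= 1 ->
     Rabs (gp a - gp b) <= 48 * Rabs (a - b)).
  { clear a b. intros a b Ha Hb. rewrite (gp_Pg a Ha), (gp_out b Hb).
    pose proof Ha as Ha'. apply Rabs_le_between in Ha'.
    assert (Hb' : b > 1 \/ b < -1).
    { destruct (Rle_dec b 1); destruct (Rle_dec (-1) b); try lra.
      exfalso; apply Hb; apply Rabs_le_between; lra. }
    destruct Hb' as [Hb'|Hb'].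
    - rewrite <- Pg1. eapply Rle_trans. apply Pg_lip; auto. rewrite Rabs_R1; lra.
      apply Rmult_le_compat_l; [lra|]. unfold Rabs; repeat destruct Rcase_abs; lra.
    - rewrite <- Pgm1. eapply Rle_trans. apply Pg_lip; auto.
      rewrite Rabs_left by lra; lra.
      apply Rmult_le_compat_l; [lra|]. unfold Rabs; repeat destruct Rcase_abs; lra. }
  destruct (Rle_dec (Rabs a) 1) as [Ha|Ha]; destruct (Rle_dec (Rabs b) 1) as [Hb|Hb].
  - rewrite !gp_Pg by auto. apply Pg_lip; auto.
  - apply Hhalf; auto.
  - rewrite Rabs_minus_sym, (Rabs_minus_sym a b). apply Hhalf; auto.
  - rewrite !gp_out by auto. rewrite Rminus_0_r, Rabs_R0. pose proof (Rabs_pos (a-b)); lra.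
Qed.

Lemma g_deriv x : is_derive g x (gp x).
Proof.
  destruct (Rle_dec (Rabs x) 1) as [H|H].
  - destruct (Rlt_or_le (Rabs x) 1) as [H1|H1].
    + rewrite gp_Pg by auto.
      apply is_derive_ext_loc with (fun y => 1 - (1 - y^2)^4).
      * apply loc_R with (1 - Rabs x). lra. intros y Hy. unfold g.
        destruct Rle_dec as [|n]; auto. exfalso; apply n.
        pose proof (Rabs_triang_inv y x). lra.
      * unfold Pg. auto_derive; auto. ring.
    + assert (Hx : x = 1 \/ x = -1).
      { apply Rabs_le_between in H. destruct (Rle_dec 0 x).
        rewrite Rabs_right in H1 by lra. lra. rewrite Rabs_left in H1 by lra. lra. }
      assert (gp x = 0) by (rewrite gp_Pg by auto; destruct Hx as [->| ->]; unfold Pg; ring).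
      rewrite H0. apply deriv_quad with 81 1; try lra.
      intros y Hy. unfold g at 2. destruct Rle_dec as [_|n]; [|tauto].
      replace (1 - x^2) with 0 by (destruct Hx as [->| ->]; ring).
      assert (E : 1 - y^2 = (x - y) * (x + y)) by (destruct Hx as [->| ->]; ring).
      assert (Hxy : Rabs (x + y) <= 3).
      { replace (x + y) with (2 * x + (y - x)) by ring.
        eapply Rle_trans. apply Rabs_triang. rewrite Rabs_mult, Rabs_right by lra. lra. }
      assert (Hd : Rabs (y - x) <= 1) by lra.
      assert (B : Rabs (g y - 1) <= (Rabs (1 - y^2))^4).
      { unfold g. destruct Rle_dec.
        - replace (1 - (1 - y^2)^4 - 1) with (- (1-y^2)^4) by ring.
          rewrite Rabs_Ropp, RPow_abs. lra.
        - rewrite Rminus_diag, Rabs_R0. apply pow_le, Rabs_pos. }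
      replace (1 - 0^4) with 1 by ring. eapply Rle_trans; [exact B|].
      rewrite E, Rabs_mult, Rabs_minus_sym.
      set (u := Rabs (y - x)) in *. set (v := Rabs (x + y)) in *.
      assert (0 <= u) by apply Rabs_pos. assert (0 <= v) by apply Rabs_pos.
      replace ((y - x)^2) with (u^2) by (unfold u; rewrite RPow_abs, Rabs_right; [ring|]; apply Rle_ge, pow2_ge_0).
      clearbody u v. assert (u^2 <= 1) by nra. assert (u^4 <= u^2) by (replace (u^4) with (u^2*u^2) by ring; assert (0 <= u^2) by nra; nra).
      idtac.
      assert (v^4 <= 81) by (replace 81 with (3^4) by ring; apply pow_incr; lra).
      replace ((u*v)^4) with (u^4 * v^4) by ring.
      assert (0 <= u^4) by (apply pow_le; lra). assert (0 <= v^4) by (apply pow_le; lra).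
      nra.
  - rewrite gp_out by auto.
    apply is_derive_ext_loc with (fun _ => 1).
    + apply loc_R with (Rabs x - 1). lra. intros y Hy. unfold g.
      destruct Rle_dec as [h|]; auto. exfalso.
      pose proof (Rabs_triang_inv x y). rewrite Rabs_minus_sym in Hy. lra.
    + apply D_const.
Qed.

Lemma Derive_g x : Derive g x = gp x.
Proof. apply is_derive_unique, g_deriv. Qed.

Definition sol (q p : R -> R) : Prop :=
  forall t, is_derive q t (p t) /\ is_derive p t (- gp (q t)).

Lemma const_of_deriv0 (f : R -> R) : (forall t, is_derive f t 0) -> forall t, f t = f 0.
Proof.
  intros H t. destruct (Rle_dec 0 t).
  - destruct (mvt f (fun _ => 0) 0 t r H) as [c [_ E]]. lra.
  - destruct (mvt f (fun _ => 0) t 0 ltac:(lra) H) as [c [_ E]]. lra.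
Qed.

Lemma energy q p : sol q p -> forall t,
  p t * p t + 2 * g (q t) = p 0 * p 0 + 2 * g (q 0).
Proof.
  intros Hs. apply (const_of_deriv0 (fun t => p t * p t + 2 * g (q t))).
  intros t. destruct (Hs t) as [Hq Hp].
  apply (D_eq _ _ ((- gp (q t) * p t + p t * - gp (q t)) + 2 * (p t * gp (q t)))); [ring|].
  apply D_plus.
  - apply D_mult; auto.
  - apply is_derive_scal. apply (D_comp g q). apply g_deriv. auto.
Qed.

Definition U (q1 p1 q2 p2 : R -> R) (t : R) :=
  (q1 t - q2 t) * (q1 t - q2 t) + (p1 t - p2 t) * (p1 t - p2 t).

Lemma U_nonneg q1 p1 q2 p2 t : 0 <= U q1 p1 q2 p2 t.
Proof. unfold U. pose proof (Rle_0_sqr (q1 t - q2 t)). pose proof (Rle_0_sqr (p1 t - p2 t)). unfold Rsqr in *. lra. Qed.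

Definition Ud (q1 p1 q2 p2 : R -> R) (y : R) :=
  2 * (q1 y - q2 y) * (p1 y - p2 y) - 2 * (p1 y - p2 y) * (gp (q1 y) - gp (q2 y)).

Lemma U_deriv q1 p1 q2 p2 : sol q1 p1 -> sol q2 p2 -> forall t,
  is_derive (U q1 p1 q2 p2) t (Ud q1 p1 q2 p2 t) /\ Rabs (Ud q1 p1 q2 p2 t) <= 49 * U q1 p1 q2 p2 t.
Proof.
  intros H1 H2 t. destruct (H1 t) as [Hq1 Hp1]. destruct (H2 t) as [Hq2 Hp2].
  set (a := q1 t - q2 t). set (b := p1 t - p2 t). set (c := gp (q1 t) - gp (q2 t)).
  unfold Ud. fold a b c. split.
  - unfold U. apply (D_eq _ _
      ((p1 t - p2 t) * (q1 t - q2 t) + (q1 t - q2 t) * (p1 t - p2 t)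
       + ((- gp (q1 t) - - gp (q2 t)) * (p1 t - p2 t) + (p1 t - p2 t) * (- gp (q1 t) - - gp (q2 t))))).
    + unfold a, b, c; ring.
    + apply (D_plus (fun y => (q1 y - q2 y) * (q1 y - q2 y)) (fun y => (p1 y - p2 y) * (p1 y - p2 y))).
      * apply (D_mult (fun y => q1 y - q2 y) (fun y => q1 y - q2 y));
        apply (D_minus q1 q2); auto.
      * apply (D_mult (fun y => p1 y - p2 y) (fun y => p1 y - p2 y));
        apply (D_minus p1 p2); auto.
  - assert (Hc : Rabs c <= 48 * Rabs a) by apply gp_lip.
    unfold U. fold a b. clearbody a b c.
    assert (Hc2: c*c <= 48*48*(a*a)).
    { pose proof (Rabs_pos c). pose proof (Rabs_pos a).
      assert (E1: c*c = Rabs c * Rabs c) by (rewrite <- Rabs_mult; symmetry; apply Rabs_right; apply Rle_ge, Rle_0_sqr).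
      assert (E2: a*a = Rabs a * Rabs a) by (rewrite <- Rabs_mult; symmetry; apply Rabs_right; apply Rle_ge, Rle_0_sqr).
      rewrite E1, E2. nra. }
    pose proof (Rle_0_sqr (a - b)). pose proof (Rle_0_sqr (a + b)).
    pose proof (Rle_0_sqr (48 * b + c)). pose proof (Rle_0_sqr (48 * b - c)).
    unfold Rsqr in *.
    apply Rabs_le_between. split; nra.
Qed.

Lemma sq0 x y : x * x + y * y <= 0 -> x = 0 /\ y = 0.
Proof. intros H. pose proof (Rle_0_sqr x). pose proof (Rle_0_sqr y). unfold Rsqr in *.
  split; nra. Qed.

Lemma gronwall q1 p1 q2 p2 : sol q1 p1 -> sol q2 p2 -> forall t, 0 <= t ->
  U q1 p1 q2 p2 t <= U q1 p1 q2 p2 0 * exp (49 * t).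
Proof.
  intros H1 H2 t Ht.
  set (V := fun y => U q1 p1 q2 p2 y * exp (- (49 * y))).
  set (dV := fun y => Ud q1 p1 q2 p2 y * exp (- (49 * y)) + U q1 p1 q2 p2 y * ((- (49 * 1)) * exp (- (49 * y)))).
  assert (HD : forall y, is_derive V y (dV y)).
  { intros y. unfold V, dV. apply (D_mult (U q1 p1 q2 p2) (fun y => exp (- (49 * y)))).
    apply U_deriv; auto.
    apply (D_comp exp (fun y => - (49 * y))). apply is_derive_exp.
    apply (D_opp (fun y => 49 * y)). apply is_derive_scal. apply D_id. }
  destruct (mvt V dV 0 t Ht HD) as [c [Hc E]].
  assert (dV c <= 0).
  { unfold dV. destruct (U_deriv _ _ _ _ H1 H2 c) as [_ B].
    apply Rabs_le_between in B. pose proof (exp_pos (- (49 * c))). nra. }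
  assert (V t <= V 0) by nra.
  unfold V in H0. rewrite Rmult_0_r, Ropp_0, exp_0, Rmult_1_r in H0.
  replace (U q1 p1 q2 p2 t) with (U q1 p1 q2 p2 t * exp (- (49 * t)) * exp (49 * t)).
  2:{ rewrite Rmult_assoc, <- exp_plus. replace (- (49 * t) + 49 * t) with 0 by ring.
      rewrite exp_0; ring. }
  apply Rmult_le_compat_r. left; apply exp_pos. auto.
Qed.

Lemma sol_rev q p s : sol q p -> sol (fun y => q (s - y)) (fun y => - p (s - y)).
Proof.
  intros H y. destruct (H (s - y)) as [Hq Hp]. split.
  - apply (D_eq _ _ ((0 - 1) * p (s - y))); [ring|].
    apply (D_comp q (fun y => s - y)); auto.
    apply (D_minus (fun _ => s) (fun y => y)). apply D_const. apply D_id.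
  - apply (D_eq _ _ (- ((0 - 1) * - gp (q (s - y))))); [ring|].
    apply (D_opp (fun y => p (s - y))).
    apply (D_comp p (fun y => s - y)); auto.
    apply (D_minus (fun _ => s) (fun y => y)). apply D_const. apply D_id.
Qed.

Lemma fwd_uniq q1 p1 q2 p2 : sol q1 p1 -> sol q2 p2 -> q1 0 = q2 0 -> p1 0 = p2 0 ->
  forall t, 0 <= t -> q1 t = q2 t /\ p1 t = p2 t.
Proof.
  intros H1 H2 E1 E2 t Ht. pose proof (gronwall _ _ _ _ H1 H2 t Ht) as G.
  unfold U in G. rewrite E1, E2, !Rminus_diag, Rmult_0_r, Rplus_0_r, Rmult_0_l in G.
  apply sq0 in G. lra.
Qed.

Lemma back_uniq q1 p1 q2 p2 s : sol q1 p1 -> sol q2 p2 -> 0 <= s ->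
  q1 s = q2 s -> p1 s = p2 s -> q1 0 = q2 0 /\ p1 0 = p2 0.
Proof.
  intros H1 H2 Hs E1 E2.
  destruct (fwd_uniq _ _ _ _ (sol_rev q1 p1 s H1) (sol_rev q2 p2 s H2)) with s as [A B]; auto.
  - simpl. rewrite Rminus_0_r; auto.
  - simpl. rewrite Rminus_0_r, E2; auto.
  - simpl in A, B. rewrite Rminus_diag in A, B. lra.
Qed.

Lemma sol_zero : sol (fun _ => 0) (fun _ => 0).
Proof. intros y. split. apply D_const. rewrite gp0, Ropp_0. apply D_const. Qed.

Lemma cont_eps (f : R -> R) x : continuity_pt f x ->
  forall eps, 0 < eps -> exists d, 0 < d /\ forall y, Rabs (y - x) < d -> Rabs (f y - f x) < eps.
Proof.
  intros H eps He. unfold continuity_pt, continue_in, limit1_in, limit_in in H.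
  destruct (H eps He) as [alp [Ha H']]. exists alp. split; auto.
  intros y Hy. destruct (Req_dec y x) as [->|Hne].
  - rewrite Rminus_diag, Rabs_R0. lra.
  - apply H'. split. split. exact I. auto. simpl. unfold R_dist. auto.
Qed.

Lemma eps_cont (f : R -> R) x :
  (forall eps, 0 < eps -> exists d, 0 < d /\ forall y, Rabs (y - x) < d -> Rabs (f y - f x) < eps) ->
  continuity_pt f x.
Proof.
  intros H. unfold continuity_pt, continue_in, limit1_in, limit_in.
  intros eps He. destruct (H eps He) as [d [Hd H']]. exists d. split; auto.
  intros y [_ Hy]. simpl in *. unfold R_dist in *. auto.
Qed.

Lemma local_sign (f : R -> R) x l : is_derive f x l -> 0 < l ->
  exists d, 0 < d /\ (forall y, x < y < x + d -> f x < f y) /\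
                      (forall y, x - d < y < x -> f y < f x).
Proof.
  intros H Hl. apply is_derive_Reals in H. destruct (H (l/2)) as [d Hd]. lra.
  exists d. split. apply cond_pos.
  assert (K : forall h, h <> 0 -> Rabs h < d -> (f (x + h) - f x) / h > 0).
  { intros h Hh Hhd. specialize (Hd h Hh Hhd). apply Rabs_lt_between in Hd. lra. }
  split.
  - intros y Hy. specialize (K (y - x)). replace (x + (y - x)) with y in K by ring.
    assert (Hp : (f y - f x) / (y - x) > 0).
    { apply K. lra. rewrite Rabs_right by lra. lra. }
    assert (f y - f x = (f y - f x) / (y - x) * (y - x)) by (field; lra). nra.
  - intros y Hy. specialize (K (y - x)). replace (x + (y - x)) with y in K by ring.
    assert (Hp : (f y - f x) / (y - x) > 0).
    { apply K. lra. rewrite Rabs_left by lra. lra. }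
    assert (f y - f x = (f y - f x) / (y - x) * (y - x)) by (field; lra). nra.
Qed.

Lemma first_zero (f : R -> R) e s1 : (forall x, continuity_pt f x) -> 0 < e ->
  (forall s, 0 < s < e -> f s > 0) -> 0 < s1 -> f s1 <= 0 ->
  exists s0, 0 < s0 <= s1 /\ f s0 = 0 /\ forall s, 0 < s < s0 -> f s > 0.
Proof.
  intros Hc He Hpos Hs1 Hf1.
  set (E := fun s => 0 <= s <= s1 /\ forall r, 0 < r < s -> f r > 0).
  destruct (completeness E) as [m [Hub Hlub]].
  - exists s1. intros s [Hs _]. lra.
  - exists 0. split. lra. intros r Hr; lra.
  assert (Hmin : E (Rmin e s1)).
  { split. split. apply Rmin_glb; lra. apply Rmin_r. intros r Hr. apply Hpos.
    split. lra. eapply Rlt_le_trans. apply Hr. apply Rmin_l. }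
  assert (Hm1 : Rmin e s1 <= m) by (apply Hub; auto).
  assert (Hm0 : 0 < m) by (pose proof (Rmin_glb_lt e s1 0); unfold Rmin in *; destruct Rle_dec; lra).
  assert (Hm2 : m <= s1) by (apply Hlub; intros s [Hs _]; lra).
  assert (P : forall r, 0 < r < m -> f r > 0).
  { intros r Hr. destruct (Rlt_or_le 0 (f r)) as [|Hfr]; auto. exfalso.
    assert (m <= r). { apply Hlub. intros s [Hs Hs']. destruct (Rle_dec s r); auto.
      specialize (Hs' r). lra. } lra. }
  exists m. split. lra. split; auto.
  destruct (Rtotal_order (f m) 0) as [Hlt|[Heq|Hgt]]; auto; exfalso.
  - destruct (cont_eps f m (Hc m) (- f m)) as [d [Hd Hd']]. lra.
    set (y := Rmax (m - d/2) (m/2)).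
    assert (Hy : 0 < y < m) by (unfold y, Rmax; destruct Rle_dec; lra).
    assert (Hyd : Rabs (y - m) < d) by (unfold y, Rmax; destruct Rle_dec; rewrite Rabs_left by lra; lra).
    specialize (Hd' y Hyd). specialize (P y Hy). apply Rabs_lt_between in Hd'. lra.
  - destruct (cont_eps f m (Hc m) (f m)) as [d [Hd Hd']]. lra.
    destruct (Req_dec m s1) as [Hms|Hms]. { subst m. lra. }
    set (y := Rmin (m + d/2) s1).
    assert (Hy : m < y <= s1) by (unfold y, Rmin; destruct Rle_dec; lra).
    assert (E y).
    { split. lra. intros r Hr. destruct (Rlt_or_le r m) as [Hrm|Hrm]. apply P; lra.
      assert (Rabs (r - m) < d). { rewrite Rabs_right by lra. unfold y in Hr.
        pose proof (Rmin_l (m + d/2) s1). lra. }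
      specialize (Hd' r H). apply Rabs_lt_between in Hd'. lra. }
    specialize (Hub y H). lra.
Qed.

Definition pt (c : R) : R * R := if Rle_dec c 2 then (0, c) else (c - 2, 2).
Definition Phi (Fq : R -> R -> R -> R) (s c : R) : R := Fq s (fst (pt c)) (snd (pt c)).
Definition Psi (Fp : R -> R -> R -> R) (s c : R) : R := Fp s (fst (pt c)) (snd (pt c)).
Definition valid (Fq : R -> R -> R -> R) (T c : R) : Prop :=
  forall s, 0 < s < T -> Phi Fq s c > 0.

Lemma flow_sol Fq Fp q0 p0 : is_flow Fq Fp ->
  sol (fun s => Fq s q0 p0) (fun s => Fp s q0 p0).
Proof.
  intros HF t. destruct (HF q0 p0) as [_ [_ H]]. destruct (H t) as [H1 H2].
  rewrite Derive_g in H2. split; auto.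
Qed.

Lemma sol_Phi Fq Fp c : is_flow Fq Fp -> sol (fun s => Phi Fq s c) (fun s => Psi Fp s c).
Proof. intros HF. apply flow_sol; auto. Qed.

Lemma Phi0 Fq Fp c : is_flow Fq Fp -> Phi Fq 0 c = fst (pt c).
Proof. intros HF. unfold Phi. apply (HF _ _). Qed.
Lemma Psi0 Fq Fp c : is_flow Fq Fp -> Psi Fp 0 c = snd (pt c).
Proof. intros HF. unfold Psi. apply (HF _ _). Qed.

Lemma pt_small c : c <= 2 -> pt c = (0, c).
Proof. intros H. unfold pt. destruct Rle_dec; tauto. Qed.
Lemma pt_big c : 2 < c -> pt c = (c - 2, 2).
Proof. intros H. unfold pt. destruct Rle_dec; auto. lra. Qed.

Lemma pt_inj c1 c2 : pt c1 = pt c2 -> c1 = c2.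
Proof.
  unfold pt. destruct (Rle_dec c1 2); destruct (Rle_dec c2 2); intros H; inversion H; lra.
Qed.

Lemma pt_dist c c' :
  (fst (pt c') - fst (pt c)) * (fst (pt c') - fst (pt c)) +
  (snd (pt c') - snd (pt c)) * (snd (pt c') - snd (pt c)) <= 2 * ((c' - c) * (c' - c)).
Proof.
  destruct (Rle_dec c 2) as [h1|h1]; destruct (Rle_dec c' 2) as [h2|h2].
  - rewrite !pt_small by auto. simpl. pose proof (Rle_0_sqr (c' - c)). unfold Rsqr in *. lra.
  - apply Rnot_le_lt in h2. rewrite (pt_small c), (pt_big c') by auto. simpl. nra.
  - apply Rnot_le_lt in h1. rewrite (pt_small c'), (pt_big c) by auto. simpl. nra.
  - apply Rnot_le_lt in h1. apply Rnot_le_lt in h2. rewrite !pt_big by auto. simpl. pose proof (Rle_0_sqr (c' - c)). unfold Rsqr in *.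
    replace (c' - 2 - (c - 2)) with (c' - c) by ring. lra.
Qed.

Lemma Phi_cont_t Fq Fp c : is_flow Fq Fp -> forall s, continuity_pt (fun s => Phi Fq s c) s.
Proof. intros HF s. apply (deriv_cont _ _ (Psi Fp s c)). apply (sol_Phi Fq Fp c HF s). Qed.
Lemma Psi_cont_t Fq Fp c : is_flow Fq Fp -> forall s, continuity_pt (fun s => Psi Fp s c) s.
Proof. intros HF s. apply (deriv_cont _ _ (- gp (Phi Fq s c))). apply (sol_Phi Fq Fp c HF s). Qed.

Lemma Phi_unif Fq Fp T c eps : is_flow Fq Fp -> 0 <= T -> 0 < eps ->
  exists d, 0 < d /\ forall c', Rabs (c' - c) < d -> forall s, 0 <= s <= T ->
    Rabs (Phi Fq s c' - Phi Fq s c) < eps.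
Proof.
  intros HF HT He.
  set (K := 2 * exp (49 * T) + 1).
  assert (HK : 0 < K) by (unfold K; pose proof (exp_pos (49 * T)); lra).
  exists (Rmin 1 (eps * eps / K)). split.
  { apply Rmin_pos. lra. apply Rdiv_lt_0_compat; nra. }
  intros c' Hc s Hs.
  pose proof (gronwall _ _ _ _ (sol_Phi Fq Fp c' HF) (sol_Phi Fq Fp c HF) s (proj1 Hs)) as G.
  unfold U in G. cbv beta in G.
  rewrite (Phi0 Fq Fp c' HF), (Phi0 Fq Fp c HF), (Psi0 Fq Fp c' HF), (Psi0 Fq Fp c HF) in G.
  pose proof (pt_dist c c') as D.
  assert (Hc1 : Rabs (c' - c) < 1) by (eapply Rlt_le_trans; [exact Hc| apply Rmin_l]).
  assert (Hc2 : Rabs (c' - c) < eps * eps / K) by (eapply Rlt_le_trans; [exact Hc| apply Rmin_r]).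
  assert (Hsq : (c' - c) * (c' - c) <= Rabs (c' - c)).
  { replace ((c' - c) * (c' - c)) with (Rabs (c' - c) * Rabs (c' - c)).
    pose proof (Rabs_pos (c' - c)). nra.
    rewrite <- Rabs_mult. apply Rabs_right. apply Rle_ge, Rle_0_sqr. }
  assert (He1 : exp (49 * s) <= exp (49 * T)).
  { destruct (Req_dec s T) as [->|hn]. lra. left. apply exp_increasing. lra. }
  assert (He2 : eps * eps / K * K = eps * eps) by (field; lra).
  assert (0 <= (fst (pt c') - fst (pt c)) * (fst (pt c') - fst (pt c)) +
         (snd (pt c') - snd (pt c)) * (snd (pt c') - snd (pt c))) by (pose proof (Rle_0_sqr (fst (pt c') - fst (pt c))); pose proof (Rle_0_sqr (snd (pt c') - snd (pt c))); unfold Rsqr in *; lra).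
  set (a := Phi Fq s c' - Phi Fq s c) in *.
  set (b := Psi Fp s c' - Psi Fp s c) in *.
  set (D0 := (fst (pt c') - fst (pt c)) * (fst (pt c') - fst (pt c)) +
         (snd (pt c') - snd (pt c)) * (snd (pt c') - snd (pt c))) in *.
  set (e := exp (49 * s)) in *. set (eT := exp (49 * T)) in *.
  assert (0 < e) by (unfold e; apply exp_pos).
  clearbody a b D0 e eT.
  assert (a * a < eps * eps).
  { pose proof (Rle_0_sqr b). unfold Rsqr in *.
    assert (a * a <= D0 * e) by lra.
    assert (D0 * e <= 2 * Rabs (c' - c) * eT) by nra.
    assert (2 * Rabs (c' - c) * eT < eps * eps).
    { unfold K in *. pose proof (Rabs_pos (c' - c)). nra. }
    lra. }
  pose proof (Rabs_pos a).
  replace (a * a) with (Rabs a * Rabs a) in H1 by (rewrite <- Rabs_mult; apply Rabs_right; apply Rle_ge, Rle_0_sqr).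
  nra.
Qed.

Lemma Phi_joint Fq Fp t0 c0 eps : is_flow Fq Fp -> 0 < t0 -> 0 < eps ->
  exists d, 0 < d /\ forall t c, Rabs (t - t0) < d -> Rabs (c - c0) < d ->
    Rabs (Phi Fq t c - Phi Fq t0 c0) < eps.
Proof.
  intros HF Ht He.
  destruct (Phi_unif Fq Fp (t0 + 1) c0 (eps/2) HF ltac:(lra) ltac:(lra)) as [d1 [Hd1 H1]].
  destruct (cont_eps _ _ (Phi_cont_t Fq Fp c0 HF t0) (eps/2) ltac:(lra)) as [d2 [Hd2 H2]].
  exists (Rmin (Rmin d1 d2) (Rmin t0 1)). split.
  { repeat apply Rmin_pos; lra. }
  intros t c Htt Hcc.
  pose proof (Rmin_l (Rmin d1 d2) (Rmin t0 1)). pose proof (Rmin_r (Rmin d1 d2) (Rmin t0 1)).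
  pose proof (Rmin_l d1 d2). pose proof (Rmin_r d1 d2). pose proof (Rmin_l t0 1). pose proof (Rmin_r t0 1).
  apply Rabs_lt_between in Htt.
  assert (A : Rabs (Phi Fq t c - Phi Fq t c0) < eps / 2) by (apply H1; lra).
  assert (B : Rabs (Phi Fq t c0 - Phi Fq t0 c0) < eps / 2) by (apply H2; apply Rabs_lt_between; lra).
  replace (Phi Fq t c - Phi Fq t0 c0) with ((Phi Fq t c - Phi Fq t c0) + (Phi Fq t c0 - Phi Fq t0 c0)) by ring.
  eapply Rle_lt_trans. apply Rabs_triang. lra.
Qed.

Lemma Phi_cont_c Fq Fp t : is_flow Fq Fp -> 0 <= t -> forall c, continuity_pt (fun c => Phi Fq t c) c.
Proof.
  intros HF Ht c. apply eps_cont. intros eps He.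
  destruct (Phi_unif Fq Fp t c eps HF Ht He) as [d [Hd H]].
  exists d. split; auto. intros y Hy. apply H; auto. lra.
Qed.

Lemma energy_Phi Fq Fp c s : is_flow Fq Fp ->
  Psi Fp s c * Psi Fp s c + 2 * g (Phi Fq s c) = snd (pt c) * snd (pt c) + 2 * g (fst (pt c)).
Proof.
  intros HF. pose proof (energy _ _ (sol_Phi Fq Fp c HF) s) as E. cbv beta in E.
  rewrite (Phi0 Fq Fp c HF), (Psi0 Fq Fp c HF) in E. exact E.
Qed.

Lemma fst_pt_nonneg c : 0 <= fst (pt c).
Proof. unfold pt. destruct Rle_dec as [h|h]; simpl. lra. apply Rnot_le_lt in h. lra. Qed.
Lemma snd_pt_big c : 2 <= c -> snd (pt c) = 2.
Proof. intros H. unfold pt. destruct Rle_dec; simpl; lra. Qed.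

Lemma Psi_big Fq Fp c : is_flow Fq Fp -> 2 <= c -> forall s, 0 < Psi Fp s c <= 3.
Proof.
  intros HF Hc.
  assert (Hsq : forall s, 2 <= Psi Fp s c * Psi Fp s c <= 6).
  { intros s. pose proof (energy_Phi Fq Fp c s HF) as E. rewrite snd_pt_big in E by auto.
    pose proof (g_range (Phi Fq s c)). pose proof (g_range (fst (pt c))). lra. }
  intros s. split.
  - destruct (Rlt_or_le 0 (Psi Fp s c)) as [|Hle]; auto. exfalso.
    assert (Hct : continuity (fun s => Psi Fp s c)) by (intros x; apply (Psi_cont_t Fq Fp c HF)).
    destruct (IVT_gen (fun s => Psi Fp s c) 0 s 0 Hct) as [r [_ Hr]].
    { rewrite (Psi0 Fq Fp c HF), snd_pt_big by auto. unfold Rmin, Rmax.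
      destruct Rle_dec; lra. }
    specialize (Hsq r). rewrite Hr in Hsq. lra.
  - specialize (Hsq s). nra.
Qed.

Lemma Phi_big Fq Fp c s : is_flow Fq Fp -> 2 <= c -> 0 <= s ->
  fst (pt c) <= Phi Fq s c <= fst (pt c) + 3 * s /\ (0 < s -> fst (pt c) < Phi Fq s c).
Proof.
  intros HF Hc Hs.
  destruct (mvt (fun s => Phi Fq s c) (fun s => Psi Fp s c) 0 s Hs) as [r [Hr E]].
  { intros x. apply (sol_Phi Fq Fp c HF x). }
  rewrite (Phi0 Fq Fp c HF) in E. pose proof (Psi_big Fq Fp c HF Hc r).
  split. split; nra. intros. nra.
Qed.

Lemma valid_big Fq Fp T c : is_flow Fq Fp -> 2 <= c -> valid Fq T c.
Proof.
  intros HF Hc s Hs. destruct (Phi_big Fq Fp c s HF Hc ltac:(lra)) as [_ H].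
  pose proof (fst_pt_nonneg c). specialize (H (proj1 Hs)). lra.
Qed.

Lemma near_zero Fq Fp c s : is_flow Fq Fp -> 0 < c <= 2 -> 0 < s < c / 8 -> Phi Fq s c > 0.
Proof.
  intros HF Hc Hs.
  assert (Hp : forall r, 0 <= r <= s -> Psi Fp r c > 0).
  { intros r Hr.
    destruct (mvt (fun s => Psi Fp s c) (fun s => - gp (Phi Fq s c)) 0 r (proj1 Hr)) as [u [Hu E]].
    { intros x. apply (sol_Phi Fq Fp c HF x). }
    rewrite (Psi0 Fq Fp c HF), pt_small in E by lra. simpl in E.
    pose proof (gp_bound (Phi Fq u c)) as B. apply Rabs_le_between in B. nra. }
  destruct (mvt (fun s => Phi Fq s c) (fun s => Psi Fp s c) 0 s ltac:(lra)) as [u [Hu E]].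
  { intros x. apply (sol_Phi Fq Fp c HF x). }
  rewrite (Phi0 Fq Fp c HF), pt_small in E by lra. simpl in E.
  specialize (Hp u Hu). nra.
Qed.

Lemma compare Fq Fp c1 c2 T : is_flow Fq Fp -> 0 < c1 < c2 -> valid Fq T c1 ->
  forall s, 0 < s < T -> Phi Fq s c1 < Phi Fq s c2.
Proof.
  intros HF Hc Hv s1 Hs1.
  destruct (Rlt_or_le (Phi Fq s1 c1) (Phi Fq s1 c2)) as [|Hle]; auto. exfalso.
  set (d := fun y => Phi Fq y c2 - Phi Fq y c1).
  assert (Hdd : forall y, is_derive d y (Psi Fp y c2 - Psi Fp y c1)).
  { intros y. apply (D_minus (fun y => Phi Fq y c2) (fun y => Phi Fq y c1)).
    apply (sol_Phi Fq Fp c2 HF y). apply (sol_Phi Fq Fp c1 HF y). }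
  assert (Hdc : forall y, continuity_pt d y) by (intros y; eapply deriv_cont; apply Hdd).
  assert (Hinit : exists e, 0 < e /\ forall y, 0 < y < e -> d y > 0).
  { destruct (Rle_dec c2 2) as [h2|h2].
    - destruct (local_sign d 0 (Psi Fp 0 c2 - Psi Fp 0 c1) (Hdd 0)) as [e [He [H1 _]]].
      { rewrite (Psi0 Fq Fp c2 HF), (Psi0 Fq Fp c1 HF), (pt_small c2), (pt_small c1) by lra.
        simpl. lra. }
      exists e. split; auto. intros y Hy. specialize (H1 y ltac:(lra)).
      unfold d in H1 |- *. rewrite (Phi0 Fq Fp c2 HF), (Phi0 Fq Fp c1 HF),
        (pt_small c2), (pt_small c1) in H1 by lra. simpl in H1. lra.
    - apply Rnot_le_lt in h2.
      assert (D0 : d 0 > 0).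
      { unfold d. rewrite (Phi0 Fq Fp c2 HF), (Phi0 Fq Fp c1 HF), (pt_big c2) by lra.
        simpl. unfold pt. destruct Rle_dec; simpl; lra. }
      destruct (cont_eps d 0 (Hdc 0) (d 0) D0) as [e [He H1]].
      exists e. split; auto. intros y Hy.
      assert (Rabs (y - 0) < e) by (rewrite Rabs_right; lra).
      specialize (H1 y H). apply Rabs_lt_between in H1. lra. }
  destruct Hinit as [e [He Hpos]].
  destruct (first_zero d e s1 Hdc He Hpos ltac:(lra) ltac:(unfold d; lra)) as [s0 [Hs0 [Hd0 Hdpos]]].
  assert (Hx : Phi Fq s0 c1 > 0) by (apply Hv; lra).
  assert (Hq : Phi Fq s0 c2 = Phi Fq s0 c1) by (unfold d in Hd0; lra).
  assert (Hder : Psi Fp s0 c2 - Psi Fp s0 c1 <= 0).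
  { destruct (Rle_lt_dec (Psi Fp s0 c2 - Psi Fp s0 c1) 0) as [|Hgt]; auto. exfalso.
    destruct (local_sign d s0 _ (Hdd s0) Hgt) as [de [Hde [_ H2]]].
    set (y := Rmax (s0 - de/2) (s0/2)).
    assert (Hy : 0 < y < s0) by (unfold y, Rmax; destruct Rle_dec; lra).
    assert (Hy2 : s0 - de < y) by (unfold y, Rmax; destruct Rle_dec; lra).
    specialize (H2 y ltac:(lra)). specialize (Hdpos y Hy). lra. }
  destruct (Rle_dec c2 2) as [h2|h2].
  - (* Wronskian argument *)
    set (W := fun y => Phi Fq y c1 * Psi Fp y c2 - Phi Fq y c2 * Psi Fp y c1).
    set (W' := fun y => (Psi Fp y c1 * Psi Fp y c2 + Phi Fq y c1 * (- gp (Phi Fq y c2))) -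
                      (Psi Fp y c2 * Psi Fp y c1 + Phi Fq y c2 * (- gp (Phi Fq y c1)))).
    assert (HW : forall y, is_derive W y (W' y)).
    { intros y. unfold W, W'.
      apply (D_minus (fun y => Phi Fq y c1 * Psi Fp y c2) (fun y => Phi Fq y c2 * Psi Fp y c1)).
      - apply (D_mult (fun y => Phi Fq y c1) (fun y => Psi Fp y c2));
        [apply (sol_Phi Fq Fp c1 HF y) | apply (sol_Phi Fq Fp c2 HF y)].
      - apply (D_mult (fun y => Phi Fq y c2) (fun y => Psi Fp y c1));
        [apply (sol_Phi Fq Fp c2 HF y) | apply (sol_Phi Fq Fp c1 HF y)]. }
    destruct (mvt W W' 0 s0 ltac:(lra) HW) as [xi [Hxi E]].
    assert (Hord : 0 <= Phi Fq xi c1 <= Phi Fq xi c2).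
    { destruct (Req_dec xi 0) as [->|h0].
      - rewrite (Phi0 Fq Fp c2 HF), (Phi0 Fq Fp c1 HF), (pt_small c2), (pt_small c1) by lra.
        simpl; lra.
      - destruct (Req_dec xi s0) as [->|h1]. lra.
        assert (0 < xi < s0) by lra. specialize (Hdpos xi H). unfold d in Hdpos.
        assert (Phi Fq xi c1 > 0) by (apply Hv; lra). lra. }
    assert (HW'0 : 0 <= W' xi).
    { unfold W'. rewrite !gp_kk.
      pose proof (kk_anti _ _ Hord).
      set (a := Phi Fq xi c1) in *. set (b := Phi Fq xi c2) in *. clearbody a b.
      assert (0 <= a * b) by nra.
      replace (Psi Fp xi c1 * Psi Fp xi c2 + a * - (b * kk b) -
                (Psi Fp xi c2 * Psi Fp xi c1 + b * - (a * kk a))) with (a * b * (kk a - kk b)) by ring.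
      apply Rmult_le_pos; lra. }
    assert (HW0 : W 0 = 0).
    { unfold W. rewrite (Phi0 Fq Fp c2 HF), (Phi0 Fq Fp c1 HF), (pt_small c2), (pt_small c1) by lra.
      simpl; ring. }
    assert (W s0 >= 0) by nra.
    unfold W in H. rewrite Hq in H.
    assert (Hp : Psi Fp s0 c2 = Psi Fp s0 c1).
    { assert (Phi Fq s0 c1 * (Psi Fp s0 c2 - Psi Fp s0 c1) >= 0) by lra. nra. }
    pose proof (energy_Phi Fq Fp c1 s0 HF) as E1. pose proof (energy_Phi Fq Fp c2 s0 HF) as E2.
    rewrite Hq, Hp in E2. rewrite (pt_small c1) in E1 by lra. rewrite (pt_small c2) in E2 by lra.
    simpl in E1, E2. nra.
  - apply Rnot_le_lt in h2.
    pose proof (Psi_big Fq Fp c2 HF ltac:(lra) s0) as P2.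
    pose proof (energy_Phi Fq Fp c1 s0 HF) as E1. pose proof (energy_Phi Fq Fp c2 s0 HF) as E2.
    rewrite Hq in E2. rewrite (pt_big c2) in E2 by lra. simpl in E2.
    assert (HE : snd (pt c1) * snd (pt c1) + 2 * g (fst (pt c1)) <= 2 * 2 + 2 * g (c2 - 2)).
    { destruct (Rle_dec c1 2) as [h1|h1].
      - rewrite pt_small by lra. simpl. rewrite g0. pose proof (g_range (c2 - 2)). nra.
      - apply Rnot_le_lt in h1. rewrite pt_big by lra. simpl.
        pose proof (g_mono (c1 - 2) (c2 - 2) ltac:(lra)). lra. }
    assert (Hp : Psi Fp s0 c1 = Psi Fp s0 c2) by nra.
    destruct (back_uniq _ _ _ _ s0 (sol_Phi Fq Fp c1 HF) (sol_Phi Fq Fp c2 HF) ltac:(lra))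
      as [A B]; cbv beta; auto.
    rewrite (Phi0 Fq Fp c1 HF), (Phi0 Fq Fp c2 HF) in A.
    rewrite (Psi0 Fq Fp c1 HF), (Psi0 Fq Fp c2 HF) in B.
    assert (pt c1 = pt c2) by (rewrite (surjective_pairing (pt c1)), (surjective_pairing (pt c2)); congruence).
    apply pt_inj in H. lra.
Qed.

Lemma valid_ext Fq Fp t c : is_flow Fq Fp -> valid Fq t c -> Phi Fq t c > 0 ->
  exists eta, 0 < eta /\ valid Fq (t + eta) c.
Proof.
  intros HF Hv Hp.
  destruct (cont_eps _ _ (Phi_cont_t Fq Fp c HF t) (Phi Fq t c) Hp) as [d [Hd H]].
  exists d. split; auto. intros s Hs.
  destruct (Rlt_or_le s t) as [Hst|Hst]. apply Hv; lra.
  assert (Rabs (s - t) < d) by (rewrite Rabs_right; lra).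
  specialize (H s H0). apply Rabs_lt_between in H. lra.
Qed.

Lemma strict_mono Fq Fp t c1 c2 : is_flow Fq Fp -> 0 < c1 < c2 -> 0 < t ->
  valid Fq t c1 -> Phi Fq t c1 > 0 -> Phi Fq t c1 < Phi Fq t c2.
Proof.
  intros HF Hc Ht Hv Hp. destruct (valid_ext Fq Fp t c1 HF Hv Hp) as [eta [He Hv']].
  apply (compare Fq Fp c1 c2 (t + eta)); auto. lra.
Qed.

Lemma valid_up Fq Fp T c1 c2 : is_flow Fq Fp -> 0 < c1 < c2 -> valid Fq T c1 -> valid Fq T c2.
Proof.
  intros HF Hc Hv s Hs. pose proof (compare Fq Fp c1 c2 T HF Hc Hv s Hs). specialize (Hv s Hs). lra.
Qed.

Lemma Phi_zero Fq Fp s : is_flow Fq Fp -> 0 <= s -> Phi Fq s 0 = 0 /\ Psi Fp s 0 = 0.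
Proof.
  intros HF Hs.
  destruct (fwd_uniq _ _ _ _ (sol_Phi Fq Fp 0 HF) sol_zero) with s as [A B]; auto.
  - cbv beta. rewrite (Phi0 Fq Fp 0 HF), pt_small by lra. reflexivity.
  - cbv beta. rewrite (Psi0 Fq Fp 0 HF), pt_small by lra. reflexivity.
Qed.

Lemma existence Fq Fp t x : is_flow Fq Fp -> 0 < t -> 0 < x ->
  exists c, 0 < c /\ valid Fq t c /\ Phi Fq t c = x.
Proof.
  intros HF Ht Hx.
  remember (x + 3) as chi eqn:Hchi.
  assert (Hhi : Phi Fq t chi > x).
  { destruct (Phi_big Fq Fp chi t HF ltac:(lra) ltac:(lra)) as [[A _] _].
    rewrite pt_big in A by (lra). simpl in A. lra. }
  assert (Hlo : exists clo, 0 < clo < chi /\ valid Fq t clo /\ Phi Fq t clo < x).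
  { apply NNPP. intros Hno.
    assert (H : forall c, 0 < c -> valid Fq t c -> Phi Fq t c >= x).
    { intros c Hc Hv. destruct (Rlt_or_le (Phi Fq t c) x) as [Hlt|]; [|lra]. exfalso.
      destruct (Rlt_or_le c chi) as [Hcc|Hcc].
      - apply Hno. exists c. auto.
      - destruct (Phi_big Fq Fp c t HF ltac:(lra) ltac:(lra)) as [[A _] _].
        rewrite pt_big in A by (lra). simpl in A. lra. }
    set (E := fun c => 0 <= c <= 2 /\ ~ valid Fq t c).
    assert (E0 : E 0).
    { split. lra. intros Hv. specialize (Hv (t/2) ltac:(lra)).
      rewrite (proj1 (Phi_zero Fq Fp (t/2) HF ltac:(lra))) in Hv. lra. }
    destruct (completeness E) as [m [Hub Hlub]].
    { exists 2. intros c [Hc _]. lra. }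
    { exists 0. auto. }
    assert (Hm0 : 0 <= m) by (apply Hub; auto).
    assert (Hm2 : m <= 2) by (apply Hlub; intros c [Hc _]; lra).
    assert (Hi : forall c, m < c -> valid Fq t c).
    { intros c Hc. destruct (Rle_dec c 2) as [h|h].
      - apply NNPP. intros Hnv. assert (E c) by (split; [lra|auto]). specialize (Hub c H0). lra.
      - apply (valid_big Fq Fp); [auto| apply Rnot_le_lt in h; lra]. }
    assert (Hii : forall c, 0 < c < m -> ~ valid Fq t c).
    { intros c Hc Hv. assert (m <= c).
      { apply Hlub. intros e [He Hne]. destruct (Rle_dec e c) as [|hn]; auto.
        exfalso. apply Hne. apply (valid_up Fq Fp t c e HF); auto. lra. }
      lra. }
    destruct (Req_dec m 0) as [Hm|Hm].
    -
      destruct (cont_eps _ _ (Phi_cont_c Fq Fp t HF ltac:(lra) 0) x Hx) as [d [Hd Hc]].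
      remember (Rmin (d/2) 1) as c eqn:Hceq.
      assert (Hcp : 0 < c) by (rewrite Hceq; apply Rmin_pos; lra).
      assert (Hcd : Rabs (c - 0) < d) by (rewrite Rminus_0_r, Rabs_right by lra;
        pose proof (Rmin_l (d/2) 1); lra).
      specialize (Hc c Hcd). rewrite (proj1 (Phi_zero Fq Fp t HF ltac:(lra))) in Hc.
      specialize (H c Hcp (Hi c ltac:(lra))). apply Rabs_lt_between in Hc. lra.
    - assert (Hmp : 0 < m) by lra.
      destruct (classic (valid Fq t m)) as [Hvm|Hnvm].
      + pose proof (H m Hmp Hvm) as Hmx.
        assert (Hnz : forall c s, m / 2 <= c <= m -> 0 < s < m / 16 -> Phi Fq s c > 0).
        { intros c s Hc Hs. apply (near_zero Fq Fp); [auto|lra|lra]. }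
        destruct (Rle_dec t (m / 16)) as [Htm|Htm].
        * apply (Hii (m/2) ltac:(lra)). intros s Hs. apply Hnz; lra.
        * apply Rnot_le_lt in Htm.
          destruct (continuity_ab_min (fun s => Phi Fq s m) (m/16) t ltac:(lra)
                      (fun s _ => Phi_cont_t Fq Fp m HF s)) as [mx [Hmin Hmx']].
          assert (Hmu : Phi Fq mx m > 0).
          { destruct (Req_dec mx t) as [->|hn]. lra. apply Hvm. lra. }
          destruct (Phi_unif Fq Fp t m (Phi Fq mx m) HF ltac:(lra) Hmu) as [d1 [Hd1 Hu]].
          remember (m - Rmin d1 m / 2) as c eqn:Hceq.
          assert (Hmn : 0 < Rmin d1 m) by (apply Rmin_pos; lra).
          pose proof (Rmin_l d1 m). pose proof (Rmin_r d1 m).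
          apply (Hii c ltac:(lra)). intros s Hs.
          destruct (Rlt_or_le s (m/16)) as [Hs1|Hs1].
          -- apply Hnz; lra.
          -- assert (Rabs (c - m) < d1) by (rewrite Rabs_left by lra; lra).
             specialize (Hu c H2 s ltac:(lra)). specialize (Hmin s ltac:(lra)).
             apply Rabs_lt_between in Hu. simpl in Hmin. lra.
      + apply not_all_ex_not in Hnvm. destruct Hnvm as [s0 Hs0].
        apply imply_to_and in Hs0. destruct Hs0 as [Hs0 Hs0'].
        assert (Hge : forall s, 0 < s < t -> 0 <= Phi Fq s m).
        { intros s Hs. destruct (Rle_lt_dec 0 (Phi Fq s m)) as [|Hneg]; auto. exfalso.
          destruct (cont_eps _ _ (Phi_cont_c Fq Fp s HF ltac:(lra) m) (- Phi Fq s m) ltac:(lra))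
            as [d [Hd Hc]].
          assert (Rabs (m + d/2 - m) < d) by (rewrite Rabs_right; lra).
          specialize (Hc _ H0). pose proof (Hi (m + d/2) ltac:(lra) s Hs).
          apply Rabs_lt_between in Hc. lra. }
        assert (Hz : Phi Fq s0 m = 0) by (pose proof (Hge s0 Hs0); lra).
        destruct (sol_Phi Fq Fp m HF s0) as [Hd _].
        apply is_derive_Reals in Hd.
        pose (pr := exist (fun l => derivable_pt_abs (fun s => Phi Fq s m) s0 l) (Psi Fp s0 m) Hd
                  : derivable_pt (fun s => Phi Fq s m) s0).
        assert (Hdm : derive_pt (fun s => Phi Fq s m) s0 pr = 0).
        { apply (deriv_minimum _ 0 t s0 pr); try lra.
          intros y Hy1 Hy2. rewrite Hz. apply Hge; lra. }
        simpl in Hdm.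
        destruct (back_uniq _ _ _ _ s0 (sol_Phi Fq Fp m HF) sol_zero ltac:(lra)) as [A B];
          cbv beta; auto.
        rewrite (Psi0 Fq Fp m HF), pt_small in B by lra. simpl in B. lra. }
  destruct Hlo as [clo [Hclo [Hvlo Hplo]]].
  assert (Hct : continuity (fun c => Phi Fq t c)) by (intros c; apply (Phi_cont_c Fq Fp t HF); lra).
  destruct (IVT_gen (fun c => Phi Fq t c) clo chi x Hct) as [c [Hc Hcx]].
  { unfold Rmin, Rmax. destruct Rle_dec; lra. }
  rewrite Rmin_left, Rmax_right in Hc by lra.
  assert (c <> clo) by (intros ->; lra).
  exists c. split. lra. split; auto.
  apply (valid_up Fq Fp t clo c HF); auto. lra.
Qed.

Lemma cont_R2 (f : R * R -> R * R) t x :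
  (forall eps : posreal, exists d : posreal, forall t' x', Rabs (t' - t) < d -> Rabs (x' - x) < d ->
     Rabs (fst (f (t',x')) - fst (f (t,x))) < eps /\ Rabs (snd (f (t',x')) - snd (f (t,x))) < eps) ->
  continuous f (t,x).
Proof.
  intros H. unfold continuous. apply filterlim_locally. intros eps.
  destruct (H eps) as [d Hd]. exists d. intros [t' x'] [B1 B2].
  destruct (Hd t' x' B1 B2) as [C1 C2]. split. exact C1. exact C2.
Qed.

Lemma pt_lip a b : Rabs (fst (pt a) - fst (pt b)) <= Rabs (a - b) /\
                   Rabs (snd (pt a) - snd (pt b)) <= Rabs (a - b).
Proof.
  unfold pt. destruct (Rle_dec a 2) as [ha|ha]; destruct (Rle_dec b 2) as [hb|hb]; simpl;
  try apply Rnot_le_lt in ha; try apply Rnot_le_lt in hb;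
  unfold Rabs; repeat destruct Rcase_abs; lra.
Qed.

Definition cf (Fq : R -> R -> R -> R) (t x : R) : R :=
  epsilon (inhabits 1) (fun c => 0 < c /\ valid Fq t c /\ Phi Fq t c = x).

Lemma cf_spec Fq Fp t x : is_flow Fq Fp -> 0 < t -> 0 < x ->
  0 < cf Fq t x /\ valid Fq t (cf Fq t x) /\ Phi Fq t (cf Fq t x) = x.
Proof.
  intros HF Ht Hx. unfold cf. apply epsilon_spec. apply (existence Fq Fp); auto.
Qed.

Lemma c_unique Fq Fp t c c' : is_flow Fq Fp -> 0 < t ->
  0 < c -> valid Fq t c -> 0 < c' -> valid Fq t c' -> Phi Fq t c = Phi Fq t c' ->
  Phi Fq t c > 0 -> c = c'.
Proof.
  intros HF Ht Hc Hv Hc' Hv' E Hp.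
  destruct (Rtotal_order c c') as [Hlt|[Heq|Hgt]]; auto; exfalso.
  - pose proof (strict_mono Fq Fp t c c' HF ltac:(lra) Ht Hv Hp). lra.
  - pose proof (strict_mono Fq Fp t c' c HF ltac:(lra) Ht Hv' ltac:(lra)). lra.
Qed.

Lemma cf_upper Fq Fp t x e : is_flow Fq Fp -> 0 < t -> 0 < x -> 0 < e ->
  exists d, 0 < d /\ forall t' x', Rabs (t' - t) < d -> Rabs (x' - x) < d ->
    cf Fq t' x' < cf Fq t x + e.
Proof.
  intros HF Ht Hx He.
  destruct (cf_spec Fq Fp t x HF Ht Hx) as [Hc [Hv Hp]].
  remember (cf Fq t x) as c eqn:Hceq. remember (c + e) as c2 eqn:Hc2.
  assert (Hv2 : valid Fq t c2) by (apply (valid_up Fq Fp t c c2); auto; lra).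
  assert (Hp2 : Phi Fq t c2 > x) by (rewrite <- Hp; apply (strict_mono Fq Fp); auto; lra).
  destruct (valid_ext Fq Fp t c2 HF Hv2 ltac:(lra)) as [eta [Heta Hv2']].
  destruct (Phi_joint Fq Fp t c2 ((Phi Fq t c2 - x)/2) HF Ht ltac:(lra)) as [da [Hda Hja]].
  exists (Rmin (Rmin da eta) (Rmin (t/2) (Rmin (x/2) ((Phi Fq t c2 - x)/2)))).
  split. { repeat apply Rmin_pos; lra. }
  intros t' x' H1 H2.
  pose proof (Rmin_l (Rmin da eta) (Rmin (t/2) (Rmin (x/2) ((Phi Fq t c2 - x)/2)))).
  pose proof (Rmin_r (Rmin da eta) (Rmin (t/2) (Rmin (x/2) ((Phi Fq t c2 - x)/2)))).
  pose proof (Rmin_l da eta). pose proof (Rmin_r da eta).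
  pose proof (Rmin_l (t/2) (Rmin (x/2) ((Phi Fq t c2 - x)/2))).
  pose proof (Rmin_r (t/2) (Rmin (x/2) ((Phi Fq t c2 - x)/2))).
  pose proof (Rmin_l (x/2) ((Phi Fq t c2 - x)/2)). pose proof (Rmin_r (x/2) ((Phi Fq t c2 - x)/2)).
  apply Rabs_lt_between in H1. apply Rabs_lt_between in H2.
  assert (Ht' : 0 < t') by lra. assert (Hx' : 0 < x') by lra.
  destruct (cf_spec Fq Fp t' x' HF Ht' Hx') as [Hc' [Hv' Hp']].
  assert (J : Rabs (Phi Fq t' c2 - Phi Fq t c2) < (Phi Fq t c2 - x)/2).
  { apply Hja. apply Rabs_lt_between; lra. rewrite Rminus_diag, Rabs_R0; lra. }
  apply Rabs_lt_between in J.
  assert (Hgt : Phi Fq t' c2 > x') by lra.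
  destruct (Rlt_or_le (cf Fq t' x') c2) as [|Hge]; [lra|exfalso].
  destruct (Req_dec (cf Fq t' x') c2) as [E|E].
  - rewrite E in Hp'. lra.
  - assert (Hv2t : valid Fq t' c2) by (intros s Hs; apply Hv2'; lra).
    pose proof (strict_mono Fq Fp t' c2 (cf Fq t' x') HF ltac:(lra) Ht' Hv2t ltac:(lra)). lra.
Qed.

Lemma cf_lower Fq Fp t x e : is_flow Fq Fp -> 0 < t -> 0 < x -> 0 < e ->
  exists d, 0 < d /\ forall t' x', Rabs (t' - t) < d -> Rabs (x' - x) < d ->
    cf Fq t x - e < cf Fq t' x'.
Proof.
  intros HF Ht Hx He.
  destruct (cf_spec Fq Fp t x HF Ht Hx) as [Hc [Hv Hp]].
  remember (cf Fq t x) as c eqn:Hceq. remember (c - e) as c1 eqn:Hc1.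
  destruct (Rle_dec c1 0) as [Hn|Hpos].
  { exists (Rmin (t/2) (x/2)). split. apply Rmin_pos; lra.
    intros t' x' H1 H2. pose proof (Rmin_l (t/2) (x/2)). pose proof (Rmin_r (t/2) (x/2)).
    apply Rabs_lt_between in H1. apply Rabs_lt_between in H2.
    destruct (cf_spec Fq Fp t' x' HF ltac:(lra) ltac:(lra)) as [Hc' _]. lra. }
  apply Rnot_le_lt in Hpos.
  assert (Key : exists d, 0 < d /\ d <= t/2 /\ d <= x/2 /\ forall t' x', Rabs (t' - t) < d -> Rabs (x' - x) < d ->
             ~ (valid Fq t' c1 /\ x' <= Phi Fq t' c1)).
  { destruct (classic (valid Fq t c1)) as [Hv1|Hnv1].
    - assert (Hlt : Phi Fq t c1 < x).
      { destruct (Rle_lt_dec (Phi Fq t c1) 0) as [|Hp1]. lra.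
        rewrite <- Hp. apply (strict_mono Fq Fp); auto; lra. }
      destruct (Phi_joint Fq Fp t c1 ((x - Phi Fq t c1)/2) HF Ht ltac:(lra)) as [da [Hda Hja]].
      exists (Rmin da (Rmin (t/2) (Rmin (x/2) ((x - Phi Fq t c1)/2)))).
      pose proof (Rmin_l da (Rmin (t/2) (Rmin (x/2) ((x - Phi Fq t c1)/2)))).
      pose proof (Rmin_r da (Rmin (t/2) (Rmin (x/2) ((x - Phi Fq t c1)/2)))).
      pose proof (Rmin_l (t/2) (Rmin (x/2) ((x - Phi Fq t c1)/2))).
      pose proof (Rmin_r (t/2) (Rmin (x/2) ((x - Phi Fq t c1)/2))).
      pose proof (Rmin_l (x/2) ((x - Phi Fq t c1)/2)). pose proof (Rmin_r (x/2) ((x - Phi Fq t c1)/2)).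
      split. { repeat apply Rmin_pos; lra. } split. lra. split. lra.
      intros t' x' A1 A2 [_ Hle].
      assert (J : Rabs (Phi Fq t' c1 - Phi Fq t c1) < (x - Phi Fq t c1)/2).
      { apply Hja. lra. rewrite Rminus_diag, Rabs_R0; lra. }
      apply Rabs_lt_between in J. apply Rabs_lt_between in A2. lra.
    - apply not_all_ex_not in Hnv1. destruct Hnv1 as [s1 Hs1].
      apply imply_to_and in Hs1. destruct Hs1 as [Hs1 Hs1'].
      exists (Rmin (t - s1) (Rmin (t/2) (x/2))).
      pose proof (Rmin_l (t - s1) (Rmin (t/2) (x/2))). pose proof (Rmin_r (t - s1) (Rmin (t/2) (x/2))).
      pose proof (Rmin_l (t/2) (x/2)). pose proof (Rmin_r (t/2) (x/2)).
      split. { repeat apply Rmin_pos; lra. } split. lra. split. lra.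
      intros t' x' A1 A2 [Hv1 _]. apply Rabs_lt_between in A1.
      apply Hs1'. apply Hv1. lra. }
  destruct Key as [d [Hd [Hdt [Hdx Hk]]]].
  exists d. split; auto. intros t' x' H1 H2.
  pose proof H1 as H1'. pose proof H2 as H2'.
  apply Rabs_lt_between in H1'. apply Rabs_lt_between in H2'.
  assert (Ht' : 0 < t') by lra. assert (Hx' : 0 < x') by lra.
  destruct (cf_spec Fq Fp t' x' HF Ht' Hx') as [Hc' [Hv' Hp']].
  destruct (Rlt_or_le c1 (cf Fq t' x')) as [|Hle]; [lra|exfalso].
  apply (Hk t' x' H1 H2).
  destruct (Req_dec (cf Fq t' x') c1) as [E|E].
  - rewrite E in Hv', Hp'. split; auto; lra.
  - split. apply (valid_up Fq Fp t' (cf Fq t' x') c1); auto; lra.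
    left. rewrite <- Hp'. apply (strict_mono Fq Fp); auto; lra.
Qed.

Lemma inD_pt c : 0 < c -> inD (pt c).
Proof.
  intros Hc. unfold inD, pt. destruct Rle_dec as [h|h]; simpl.
  - right. split; lra.
  - left. apply Rnot_le_lt in h. split; lra.
Qed.

Lemma inD_repr z : inD z -> exists c, 0 < c /\ pt c = z.
Proof.
  destruct z as [a b]. unfold inD; simpl. intros [[Ha Hb]|[Ha Hb]].
  - subst b. destruct (Req_dec a 0) as [->|Hn].
    + exists 2. split. lra. rewrite pt_small by lra. auto.
    + exists (a + 2). split. lra. rewrite pt_big by lra. f_equal; ring.
  - subst a. exists b. split. lra. rewrite pt_small by lra. auto.
Qed.

Theorem lemma5p16 (Fq Fp : R -> R -> R -> R) (HF : is_flow Fq Fp) :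
  exists Delta : R -> R -> R * R,
    (forall t x, 0 < t -> 0 < x -> Delta_prop Fq Delta t x) /\
    (forall Delta' : R -> R -> R * R,
        (forall t x, 0 < t -> 0 < x -> Delta_prop Fq Delta' t x) ->
        forall t x, 0 < t -> 0 < x -> Delta' t x = Delta t x) /\
    (* (1) continuity on ]0,+oo[ x ]0,+oo[ *)
    (forall t x, 0 < t -> 0 < x ->
        continuous (fun z : R * R => Delta (fst z) (snd z)) (t, x)) /\
    (* (2) *)
    (forall t0 x0 x0' p0 p0', 0 < t0 ->
        Delta t0 x0 = (0, p0) -> Delta t0 x0' = (0, p0') ->
        0 < x0 -> x0 < x0' -> x0' < qsharp Fq t0 -> p0 < p0') /\
    (* (3) *)
    (forall x, 0 < x ->
        filterlim (fun t => Delta t x) (at_right 0) (locally (x, 2))).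
Proof.
  exists (fun t x => pt (cf Fq t x)).
  split; [|split; [|split; [|split]]].
  - intros t x Ht Hx. destruct (cf_spec Fq Fp t x HF Ht Hx) as [Hc [Hv Hp]].
    split; [|split]. apply inD_pt; auto. exact Hp.
    intros s Hs. apply Hv; auto.
  - intros D' HD' t x Ht Hx.
    destruct (HD' t x Ht Hx) as [Hin [Hq Hpos]].
    destruct (inD_repr _ Hin) as [c [Hc Hpc]].
    rewrite <- Hpc in Hq, Hpos. rewrite <- Hpc. f_equal.
    destruct (cf_spec Fq Fp t x HF Ht Hx) as [Hc' [Hv' Hp']].
    assert (Hvc : valid Fq t c) by (intros s Hs; apply Hpos; auto).
    assert (Hq' : Phi Fq t c = x) by exact Hq.
    apply (c_unique Fq Fp t c (cf Fq t x) HF Ht Hc Hvc Hc' Hv'); lra.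
  - intros t x Ht Hx. apply cont_R2. intros eps. simpl.
    destruct (cf_upper Fq Fp t x eps HF Ht Hx (cond_pos eps)) as [d1 [Hd1 H1]].
    destruct (cf_lower Fq Fp t x eps HF Ht Hx (cond_pos eps)) as [d2 [Hd2 H2]].
    assert (Hd : 0 < Rmin d1 d2) by (apply Rmin_pos; auto).
    exists (mkposreal _ Hd). simpl. intros t' x' A1 A2.
    pose proof (Rmin_l d1 d2). pose proof (Rmin_r d1 d2).
    specialize (H1 t' x' ltac:(lra) ltac:(lra)). specialize (H2 t' x' ltac:(lra) ltac:(lra)).
    destruct (pt_lip (cf Fq t' x') (cf Fq t x)) as [L1 L2].
    assert (Rabs (cf Fq t' x' - cf Fq t x) < eps) by (apply Rabs_lt_between; lra).
    split; lra.
  - intros t0 x0 x0' p0 p0' Ht E0 E0' Hx0 Hlt _.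
    destruct (cf_spec Fq Fp t0 x0 HF Ht Hx0) as [Hc [Hv Hp]].
    destruct (cf_spec Fq Fp t0 x0' HF Ht ltac:(lra)) as [Hc' [Hv' Hp']].
    assert (K : forall c p, pt c = (0, p) -> p = c).
    { intros c p. unfold pt. destruct Rle_dec as [h|h]; intros E; inversion E; lra. }
    apply K in E0. apply K in E0'. subst p0 p0'.
    destruct (Rtotal_order (cf Fq t0 x0) (cf Fq t0 x0')) as [|[E|E]]; auto; exfalso.
    + rewrite E in Hp. lra.
    + pose proof (strict_mono Fq Fp t0 _ _ HF (conj Hc' E) Ht Hv' ltac:(lra)). lra.
  - intros x Hx. apply filterlim_locally. intros eps.
    unfold at_right, within.
    apply loc_R with (Rmin (x/3) (eps/4)).
    { apply Rmin_pos. lra. pose proof (cond_pos eps). lra. }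
    intros t Ht Htp.
    pose proof (Rmin_l (x/3) (eps/4)). pose proof (Rmin_r (x/3) (eps/4)).
    rewrite Rminus_0_r in Ht. rewrite Rabs_right in Ht by lra.
    destruct (cf_spec Fq Fp t x HF Htp Hx) as [Hc [Hv Hp]].
    assert (Hbig : 2 < cf Fq t x).
    { destruct (Rlt_or_le 2 (cf Fq t x)) as [|Hle]; auto. exfalso.
      assert (A : Phi Fq t (cf Fq t x) <= Phi Fq t 2).
      { destruct (Req_dec (cf Fq t x) 2) as [->|hn]. lra.
        left. apply (strict_mono Fq Fp); auto; lra. }
      destruct (Phi_big Fq Fp 2 t HF ltac:(lra) ltac:(lra)) as [[_ B] _].
      rewrite pt_small in B by lra. simpl in B. lra. }
    destruct (Phi_big Fq Fp (cf Fq t x) t HF ltac:(lra) ltac:(lra)) as [[B1 B2] _].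
    rewrite pt_big in B1, B2 |- * by lra. simpl in B1, B2.
    split; simpl.
    + change (Rabs (cf Fq t x - 2 - x) < eps). apply Rabs_lt_between. lra.
    + change (Rabs (2 - 2) < eps). rewrite Rminus_diag, Rabs_R0. apply cond_pos.
Qed.
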